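(* Let $G\in\mathcal{RG}^{{\underline{\kappa}},*}_{g,n}$ be a non-bipartite ribbon graph. Then: (1) $\operatorname{vp}_G:\mathbb R^{E(G)}\to\mathbb R^n$ is surjective; (2) for every $\underline b\in\mathbb R^n$, $\operatorname{vp}_G^{-1}(\underline b)$ is an affine subspace of $\mathbb R^{E(G)}$ of dimension $|E(G)|-|V(G)|$; (3) regarding the coordinates $w(e)$ as affine functions on $\operatorname{vp}_G^{-1}(\underline b)$, for every $e\in S(G)$ the function $w(e)$ is constant equal to $f_e(\underline b)$, and for every $e\in E(G)\setminus S(G)$ it is non-constant; (4) if $\underline b\in\mathbb Z^n$ and $b_1+\dots+b_n\equiv0\pmod 2$, then $\operatorname{vp}_G^{-1}(\underline b)\cap\mathbb Z^{E(G)}$ is a lattice in $\operatorname{vp}_G^{-1}(\underline b)$; otherwise it is empty.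
   Context: Ribbon graph: finite graph (loops, multiple edges allowed) with cyclic order of half-edges at each vertex, determining faces and genus. For ${\underline{\kappa}}$ a partition with odd parts, $\mathcal{RG}^{{\underline{\kappa}},*}_{g,n}$: isomorphism classes of connected ribbon graphs of genus $g$ with $n$ labeled vertices and face degrees ${\underline{\kappa}}$. Weight function $w:E(G)\to\mathbb R$; $\operatorname{vp}_G(w)_v=\sum_e a_{ve}w(e)$, $a_{ve}=2$ for a loop at $v$, $1$ for a non-loop edge at $v$, $0$ otherwise. For non-bipartite $G$, $e$ is static if some component of $G-e$ is bipartite; $S(G)$ the static edges. For $e\in S(G)$, $f_e$ is the linear function on $\mathbb R^n$: if $e$ is a bridge, with $I,J$ the labels of the two color classes of the bipartite component of $G-e$, $e$ incident to the class $I$, $f_e(\underline b)=\sum_{I}b_i-\sum_Jb_j$; if $e$ is not a bridge ($G-e$ connected bipartite, both endpoints of $e$ in class $I$), $f_e(\underline b)=\tfrac12(\sum_Ib_i-\sum_Jb_j)$. *)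

(* Defs.v *)
From HB Require Import structures.
From mathcomp Require Import all_boot all_order all_algebra all_fingroup.
From mathcomp Require Import reals.
Set Implicit Arguments. Unset Strict Implicit. Unset Printing Implicit Defensive.
Import Order.TTheory GRing.Theory Num.Theory.
Local Open Scope ring_scope.

(* A ribbon graph with n labeled vertices, in the standard combinatorial
   (permutation) model: a finite set of half-edges, a permutation [rot]
   (the cyclic order of half-edges around each vertex) and a fixed-point-free
   involution [inv] (pairing half-edges into edges).  The vertices are the
   cycles of [rot]; they are labeled bijectively by 'I_n via [vlab]. *)

Record ribbon_graph (n : nat) := RibbonGraph {
  half : finType;
  rot : {perm half};
  inv : {perm half};
  vlab : half -> 'I_n;
  invK_ax : forall h, inv (inv h) = h;
  inv_fpf_ax : forall h, inv h != h;
  vlab_orbit_ax : forall h h', (vlab h == vlab h') = (h' \in porbit rot h);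
  vlab_surj_ax : forall v : 'I_n, exists h, vlab h = v
}.

Arguments vlab [n] r _.

Section RG.
Variables (n : nat) (G : ribbon_graph n).

Definition edge_set : {set {set half G}} := [set [set h; inv G h] | h : half G].
Definition edge := {e : {set half G} | e \in edge_set}.

(* Faces: cycles of the face permutation (first inv, then rot). *)
Definition face_perm : {perm half G} := (inv G * rot G)%g.
Definition faces : {set {set half G}} := porbits face_perm.
Definition face_degrees : seq nat := [seq #|f| | f : {set half G} in faces].

Definition adj : rel 'I_n :=
  fun u v => [exists h : half G, (vlab G h == u) && (vlab G (inv G h) == v)].
Definition connected_rg : bool := [forall u, forall v, connect adj u v].

Definition has_genus (g : nat) : Prop :=
  (2 - 2 * (g : int) = (n : int) - (#|edge_set| : int) + (#|faces| : int))%R.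

Definition in_RG (kappa : seq nat) (g : nat) : Prop :=
  [/\ connected_rg, has_genus g & perm_eq face_degrees kappa].

(* a_{ve}: number of half-edges of e attached at v (2 for a loop at v,
   1 for a non-loop edge at v, 0 otherwise). *)
Definition inc (v : 'I_n) (e : edge) : nat := #|[set h in val e | vlab G h == v]|.

Definition bipartite : bool :=
  [exists c : {ffun 'I_n -> bool},
     [forall h : half G, c (vlab G h) != c (vlab G (inv G h))]].

Definition adj_minus (e : edge) : rel 'I_n :=
  fun u v => [exists h : half G,
     [&& h \notin val e, vlab G h == u & vlab G (inv G h) == v]].
Definition comp_minus (e : edge) (u : 'I_n) : {set 'I_n} :=
  [set v | connect (adj_minus e) u v].
Definition is_bridge (e : edge) : bool :=
  ~~ [forall u, forall v, connect (adj_minus e) u v].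

Definition proper_on (e : edge) (C : {set 'I_n}) (c : {ffun 'I_n -> bool}) : bool :=
  [forall h : half G, ((h \notin val e) && (vlab G h \in C)) ==>
                      (c (vlab G h) != c (vlab G (inv G h)))].

Definition static (e : edge) : bool :=
  ~~ bipartite &&
  [exists u, exists c : {ffun 'I_n -> bool}, proper_on e (comp_minus e u) c].

(* Data defining f_e: a bipartite component C = comp_minus e u of G - e with
   a proper colouring c; I = {v in C | c v}, J = {v in C | ~~ c v}, and e is
   incident to the class I. *)
Definition fe_data (e : edge) (p : 'I_n * {ffun 'I_n -> bool}) : bool :=
  proper_on e (comp_minus e p.1) p.2 &&
  [exists h : half G, [&& h \in val e, vlab G h \in comp_minus e p.1 & p.2 (vlab G h)]].

Variable R : realType.

Definition vp (w : edge -> R) (v : 'I_n) : R := \sum_(e : edge) (inc v e)%:R * w e.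

Definition f_e (e : edge) (b : 'I_n -> R) : R :=
  match [pick p | fe_data e p] with
  | Some p =>
      let C := comp_minus e p.1 in
      (if is_bridge e then 1 else 2^-1) *
      ((\sum_(i in C | p.2 i) b i) - (\sum_(j in C | ~~ p.2 j) b j))
  | None => 0
  end.

Definition in_fiber (b : 'I_n -> R) (w : edge -> R) : Prop :=
  forall v, vp w v = b v.

Definition lin_indep (d : nat) (u : 'I_d -> edge -> R) : Prop :=
  forall lam : 'I_d -> R, (forall e, \sum_k lam k * u k e = 0) -> forall k, lam k = 0.

Definition aff_param (d : nat) (w0 : edge -> R) (u : 'I_d -> edge -> R)
  (lam : 'I_d -> R) (e : edge) : R := w0 e + \sum_k lam k * u k e.

Definition fiber_affine_dim (b : 'I_n -> R) (d : nat) (w0 : edge -> R)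
  (u : 'I_d -> edge -> R) : Prop :=
  [/\ (d + n)%N = #|edge_set|, lin_indep u &
      forall w, in_fiber b w <-> exists lam, forall e, w e = aff_param w0 u lam e].

Definition integral_w (w : edge -> R) : Prop := forall e, w e \is a Num.int.

End RG.

(* Main.v *)
Require Import Defs.
From HB Require Import structures.
From mathcomp Require Import all_boot all_order all_algebra all_fingroup.
From mathcomp Require Import reals.
From mathcomp Require Import boolp zify ring.
Set Implicit Arguments. Unset Strict Implicit. Unset Printing Implicit Defensive.
Import Order.TTheory GRing.Theory Num.Theory.
Local Open Scope ring_scope.
Lemma connect_rind (T : finType) (e : rel T) (x : T) (Q : T -> Prop) :
  Q x -> (forall y z, connect e x y -> Q y -> e y z -> Q z) ->
  forall y, connect e x y -> Q y.
Proof.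
move=> Qx step y /connectP [p]; elim/last_ind: p y => [|p z IH] y /=.
  by move=> _ ->.
rewrite rcons_path last_rcons => /andP [pp ez] ->.
apply: (step (last x p)) => //; last exact: IH.
by apply/connectP; exists p.
Qed.

Section Abstract.
Variables (n : nat) (T : finType) (vl : T -> 'I_n) (iv : T -> T) (P : pred T).
Variable S : ('I_n -> int) -> Prop.
Hypothesis S0 : S (fun _ => 0).
Hypothesis Ssub : forall t1 t2 t, S t1 -> S t2 -> (forall i, t i = t1 i - t2 i) -> S t.
Hypothesis Sgen : forall h, P h -> S (fun i => ((vl h == i) : nat)%:Z + ((vl (iv h) == i) : nat)%:Z).

Definition adjP : rel 'I_n := fun u v => [exists h, [&& P h, vl h == u & vl (iv h) == v]].
Definition ev (x : 'I_n) : 'I_n -> int := fun i => ((x == i) : nat)%:Z.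

Lemma Sadd t1 t2 t : S t1 -> S t2 -> (forall i, t i = t1 i + t2 i) -> S t.
Proof.
move=> s1 s2 E; apply: (Ssub s1 (t2 := fun i => 0 - t2 i)).
  by apply: (Ssub S0 s2).
by move=> i; rewrite E; lia.
Qed.

Lemma abstract_main (r : 'I_n) :
  (forall c : 'I_n -> bool, exists h, [/\ P h, connect adjP r (vl h) & c (vl h) = c (vl (iv h))]) ->
  S (fun i => 2 * ev r i) /\ forall x, connect adjP r x -> S (fun i => ev x i + ev r i).
Proof.
move=> nobip.
pose E v := S (fun i => ev v i - ev r i).
pose O v := S (fun i => ev v i + ev r i).
have gen : forall h, P h -> S (fun i => ev (vl h) i + ev (vl (iv h)) i) by [].
have EO : forall v, connect adjP r v -> E v \/ O v.
  apply: connect_rind.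
    left; rewrite /E; apply: (Ssub S0 S0) => i; lia.
  move=> y z _ [Ey|Oy] /existsP [h /and3P [Ph /eqP hy /eqP hz]].
    right; apply: (Ssub (gen h Ph) Ey) => i; rewrite -hy -hz; lia.
  left; apply: (Ssub (gen h Ph) Oy) => i; rewrite -hy -hz; lia.
have two : S (fun i => 2 * ev r i).
  case: (pselect (exists v, connect adjP r v /\ E v /\ O v)) => [[v [_ [Ev Ov]]]|nboth].
    by apply: (Ssub Ov Ev) => i; lia.
  have [h [Ph cy ceq]] := nobip (fun v => `[< O v >]).
  have cz : connect adjP r (vl (iv h)).
    apply: (connect_trans cy); apply: connect1; apply/existsP; exists h.
    by rewrite Ph !eqxx.
  move: ceq; case: (asboolP (O (vl h))) => Oy; case: (asboolP (O (vl (iv h)))) => Oz // _.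
    apply: (Ssub (t1 := fun i => ev (vl h) i + ev r i + (ev (vl (iv h)) i + ev r i))).
    - exact: (Sadd Oy Oz).
    - exact: (gen h Ph).
    - move=> i; lia.
  have Ey : E (vl h) by case: (EO _ cy).
  have Ez : E (vl (iv h)) by case: (EO _ cz).
  apply: (Ssub (t1 := fun i => ev (vl h) i + ev (vl (iv h)) i)
                (t2 := fun i => ev (vl h) i - ev r i + (ev (vl (iv h)) i - ev r i))).
  - exact: (gen h Ph).
  - exact: (Sadd Ey Ez).
  - move=> i; lia.
split=> // x /EO [Ex|//].
by apply: (Sadd Ex two) => i; lia.
Qed.

End Abstract.
Definition Dmat (K : pzSemiRingType) n m (s : nat -> K) : 'M[K]_(n, m) :=
  \matrix_(i, j) (s i *+ (i == j :> nat)).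

Lemma Dmat_mul (K : pzSemiRingType) n d p (s : nat -> K) (Z : 'M[K]_(n + d, p)) i k :
  (Dmat n (n + d) s *m Z) i k = s i * Z (lshift d i) k.
Proof.
rewrite !mxE (bigD1 (lshift d i)) //= mxE eqxx mulr1n big1 ?addr0 //.
move=> j nj; rewrite mxE.
have -> : (i == j :> nat) = false.
  apply/negbTE; apply: contra nj => /eqP ij; apply/eqP/val_inj => /=; by rewrite ij.
by rewrite mulr0n mul0r.
Qed.

Lemma map_Dmat (K : numDomainType) n m (s : nat -> int) :
  map_mx (intr : int -> K) (Dmat n m s) = Dmat n m (fun i => (s i)%:~R).
Proof. by apply/matrixP => i j; rewrite !mxE rmorphMn. Qed.

Lemma rank_le (R : fieldType) n m (A : 'M[R]_(n, m)) (X : 'M_(m, n)) :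
  A *m X = 1%:M -> (n <= m)%N.
Proof.
move=> AX; have := mxrankM_maxl A X; rewrite AX mxrank1 => h.
exact: leq_trans h (rank_leq_col A).
Qed.

Lemma kernel_char (K : idomainType) n d (L Linv : 'M[K]_n) (s : nat -> K)
  (A' : 'M[K]_(n, n + d)) (N Ninv : 'M[K]_(n + d)) :
  A' = L *m Dmat n (n + d) s *m N -> Linv *m L = 1%:M -> Ninv *m N = 1%:M ->
  N *m Ninv = 1%:M -> (forall i : 'I_n, s i != 0) ->
  forall x : 'cV[K]_(n + d), A' *m x = 0 <-> exists lam : 'cV_d, x = Ninv *m col_mx 0 1%:M *m lam.
Proof.
move=> eA LL NN NN' snz x; split.
  move=> Ax.
  have DNx : Dmat n (n + d) s *m (N *m x) = 0.
    have : Linv *m (A' *m x) = 0 by rewrite Ax mulmx0.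
    by rewrite eA -!mulmxA (mulmxA Linv) LL mul1mx.
  exists (dsubmx (N *m x)).
  have u0 : usubmx (N *m x) = 0.
    apply/matrixP => i k; rewrite !mxE.
    move/matrixP: DNx => /(_ i k) /eqP; rewrite Dmat_mul !mxE.
    by rewrite mulf_eq0 (negbTE (snz i)) /= => /eqP.
  by rewrite -mulmxA mul_col_mx mul0mx mul1mx -u0 vsubmxK mulmxA NN mul1mx.
move=> [lam ->].
rewrite eA -!mulmxA (mulmxA N) NN' mul1mx mul_col_mx mul0mx mul1mx.
have -> : Dmat n (n + d) s *m col_mx 0 lam = 0.
  by apply/matrixP => i k; rewrite Dmat_mul col_mxEu !mxE mulr0.
by rewrite mulmx0.
Qed.

Lemma snf_nz n d (A' : 'M[int]_(n, n + d)) (X : 'M[int]_(n + d, n)) (L : 'M[int]_n)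
  (N : 'M[int]_(n + d)) (s : nat -> int) :
  A' *m X = 2%:M -> L \in unitmx -> A' = L *m Dmat n (n + d) s *m N ->
  forall i : 'I_n, s i != 0.
Proof.
move=> AX Lu eA i; apply/negP => /eqP si0.
have key : Dmat n (n + d) s *m (N *m X) = 2 *: invmx L.
  rewrite -mul_mx_scalar -AX eA -!mulmxA mulKmx //.
have z : forall k, invmx L i k = 0.
  move=> k; move/matrixP: key => /(_ i k); rewrite Dmat_mul si0 mul0r !mxE => /esym/eqP.
  by rewrite mulf_eq0 /= => /eqP.
move/matrixP: (mulVmx Lu) => /(_ i i); rewrite !mxE eqxx /= big1 // => k _.
by rewrite z mul0r.
Qed.

Lemma kb (R : realType) n d (A' : 'M[int]_(n, n + d)) (X : 'M[int]_(n + d, n)) :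
  A' *m X = 2%:M ->
  exists U : 'M[int]_(n + d, d),
  [/\ (forall lam : 'cV[R]_d, map_mx intr U *m lam = 0 -> lam = 0),
      (forall x : 'cV[R]_(n + d), map_mx intr A' *m x = 0 <-> exists lam, x = map_mx intr U *m lam)
    & (forall x : 'cV[int]_(n + d), A' *m x = 0 <-> exists lam, x = U *m lam)].
Proof.
move=> AX.
have [L Lu [N Nu [ds _ eA0]]] := int_Smith_normal_form A'.
have eA : A' = L *m Dmat n (n + d) (fun i => ds`_i) *m N by exact: eA0.
have snz := snf_nz AX Lu eA.
exists (invmx N *m col_mx 0 1%:M); split.
- move=> lam; rewrite map_mxM -mulmxA => h.
  have : map_mx intr N *m (map_mx intr (invmx N) *m (map_mx intr (col_mx 0 1%:M) *m lam)) = 0.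
    by rewrite h mulmx0.
  rewrite mulmxA -map_mxM mulmxV // map_mx1 mul1mx map_col_mx map_mx0 map_mx1.
  by rewrite mul_col_mx mul0mx mul1mx => /eqP; rewrite -col_mx0 => /eqP/eq_col_mx [].
- move=> x.
  have -> : map_mx intr (invmx N *m col_mx 0 1%:M) = map_mx (intr : int -> R) (invmx N) *m col_mx 0 1%:M.
    by rewrite map_mxM map_col_mx map_mx0 map_mx1.
  apply: (kernel_char (L := map_mx intr L) (Linv := map_mx intr (invmx L))
         (s := fun i => (ds`_i)%:~R) (N := map_mx intr N)).
  + by rewrite eA !map_mxM map_Dmat.
  + by rewrite -map_mxM mulVmx // map_mx1.
  + by rewrite -map_mxM mulVmx // map_mx1.
  + by rewrite -map_mxM mulmxV // map_mx1.
  + by move=> i; rewrite intr_eq0 snz.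
- move=> x.
  apply: (kernel_char (L := L) (Linv := invmx L) (s := fun i => ds`_i) (N := N)) => //.
  + by rewrite mulVmx.
  + by rewrite mulVmx.
  + by rewrite mulmxV.
Qed.

Section Graph.
Variables (n : nat) (G : ribbon_graph n).
Notation H := (Defs.half G).
Notation vl := (vlab G).
Notation iv := (Defs.inv G).

Lemma ivK h : iv (iv h) = h. Proof. exact: invK_ax. Qed.
Lemma iv_neq h : iv h != h. Proof. exact: inv_fpf_ax. Qed.

Lemma edge_of_mem (h : H) : [set h; iv h] \in edge_set G.
Proof. by apply/imsetP; exists h. Qed.

Definition edge_of (h : H) : edge G := exist _ [set h; iv h] (edge_of_mem h).

Lemma edge_ofP (e : edge G) : exists h, e = edge_of h.
Proof.
case: e => s hs; case/imsetP: (hs) => h _ eh; exists h; apply: val_inj => /=; exact: eh.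
Qed.

Lemma card_pair (a b : H) (p : pred H) : b != a ->
  #|[set x in [set a; b] | p x]| = (p a + p b)%N.
Proof.
move=> ba.
have E : [set x in [set a; b] | p x] = [set x in [set a] | p x] :|: [set x in [set b] | p x].
  by apply/setP => x; rewrite !inE andb_orl.
have D : [set x in [set a] | p x] :&: [set x in [set b] | p x] = set0.
  apply/setP => x; rewrite !inE.
  by case: eqP => [->|] //; rewrite eq_sym (negbTE ba) andbF.
have C1 (c : H) : #|[set x in [set c] | p x]| = p c.
  case pc: (p c).
    have -> : [set x in [set c] | p x] = [set c].
      by apply/setP => x; rewrite !inE; case: eqP => [->|]; rewrite ?pc.
    by rewrite cards1.
  have -> : [set x in [set c] | p x] = set0.
    by apply/setP => x; rewrite !inE; case: eqP => [->|]; rewrite ?pc.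
  by rewrite cards0.
by rewrite E cardsU D cards0 subn0 !C1.
Qed.

Lemma inc_edge_of v h : inc v (edge_of h) = ((vl h == v) + (vl (iv h) == v))%N.
Proof. by rewrite /inc /= card_pair // iv_neq. Qed.

Definition vpZ (w : edge G -> int) (v : 'I_n) : int := \sum_e (inc v e)%:Z * w e.

Definition SQ (Q : pred (edge G)) (t : 'I_n -> int) : Prop :=
  exists w : edge G -> int, (forall e, ~~ Q e -> w e = 0) /\ forall v, vpZ w v = t v.

Lemma SQ0 (Q : pred (edge G)) : SQ Q (fun _ => 0).
Proof. exists (fun _ => 0); split => // v; rewrite /vpZ big1 // => e _; by rewrite mulr0. Qed.

Lemma SQsub (Q : pred (edge G)) t1 t2 t : SQ Q t1 -> SQ Q t2 -> (forall i, t i = t1 i - t2 i) -> SQ Q t.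
Proof.
move=> [w1 [s1 e1]] [w2 [s2 e2]] E; exists (fun e => w1 e - w2 e); split.
  by move=> e qe; rewrite s1 // s2 // subr0.
move=> v; rewrite E -e1 -e2 /vpZ -sumrB; apply: eq_bigr => e _; by rewrite mulrBr.
Qed.

Lemma SQgen (Q : pred (edge G)) h : Q (edge_of h) ->
  SQ Q (fun i => ((vl h == i) : nat)%:Z + ((vl (iv h) == i) : nat)%:Z).
Proof.
move=> qh; exists (fun e => ((e == edge_of h) : nat)%:Z); split.
  by move=> e qe; case: eqP => // eh; rewrite eh qh in qe.
move=> v; rewrite /vpZ (bigD1 (edge_of h)) //= eqxx mulr1 big1 ?addr0.
  by rewrite inc_edge_of PoszD.
by move=> e /negbTE ->; rewrite mulr0.
Qed.


Lemma vpZ_sum (K : finType) (a : K -> int) (W : K -> edge G -> int) v :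
  vpZ (fun e => \sum_k a k * W k e) v = \sum_k a k * vpZ (W k) v.
Proof.
rewrite /vpZ; under eq_bigr do rewrite mulr_sumr; rewrite exchange_big /=.
apply: eq_bigr => k _; rewrite mulr_sumr; apply: eq_bigr => e _; ring.
Qed.

Lemma vpZ_sub (W1 W2 : edge G -> int) v :
  vpZ (fun e => W1 e - W2 e) v = vpZ W1 v - vpZ W2 v.
Proof. rewrite /vpZ -sumrB; apply: eq_bigr => e _; ring. Qed.

Lemma sum_ev (t : 'I_n -> int) v : \sum_x t x * ev x v = t v.
Proof.
rewrite (bigD1 v) //= /ev eqxx mulr1 big1 ?addr0 // => x /negbTE ->; by rewrite mulr0.
Qed.

Section Conn.
Hypothesis conn : connected_rg G.
Hypothesis nbip : ~~ bipartite G.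

Lemma some_half : exists h : H, true.
Proof.
case: (pickP (fun _ : H => true)) => [h _|none]; first by exists h.
move/negP: nbip; case; apply/existsP; exists [ffun => true]; apply/forallP => h.
by have := none h.
Qed.

Lemma conn_adjP r v : connect (adjP vl iv predT) r v.
Proof.
have E : adjP vl iv predT =2 adj G by [].
rewrite (eq_connect E); by move/forallP: conn => /(_ r) /forallP; apply.
Qed.

Lemma full_gen r : SQ predT (fun i => 2 * ev r i) /\ forall x, SQ predT (fun i => ev x i + ev r i).
Proof.
have nob : forall c : 'I_n -> bool, exists h, [/\ predT h, connect (adjP vl iv predT) r (vl h)
     & c (vl h) = c (vl (iv h))].
  move=> c; move: nbip; rewrite /bipartite negb_exists => /forallP /(_ [ffun i => c i]).
  rewrite negb_forall => /existsP [h]; rewrite !ffunE negbK => /eqP ch.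
  by exists h; split => //; apply: conn_adjP.
have [A B] := (abstract_main (vl := vl) (iv := iv) (P := predT) (S := SQ predT) (SQ0 _) (@SQsub _)
   (fun h _ => @SQgen predT h isT) nob).
by split => // x; apply: B; apply: conn_adjP.
Qed.

Lemma two_ev x : SQ predT (fun i => 2 * ev x i).
Proof.
have [h0 _] := some_half; have [S2 Sx] := full_gen (vl h0).
have Nx : SQ predT (fun i => - (ev x i + ev (vl h0) i)).
  by eapply SQsub; [exact: SQ0 | exact: Sx x | move=> i /=; ring].
have Sx2 : SQ predT (fun i => 2 * (ev x i + ev (vl h0) i)).
  by eapply SQsub; [exact: Sx x | exact: Nx | move=> i /=; ring].
by eapply SQsub; [exact: Sx2 | exact: S2 | move=> i /=; ring].
Qed.

Lemma surjZ (t : 'I_n -> int) : (2 %| \sum_v t v)%Z -> exists w, forall v, vpZ w v = t v.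
Proof.
move=> /dvdzP [q hq].
have [h0 _] := some_half; set r := vl h0; have [[w2 [_ e2]] Sx] := full_gen r.
have [W eW] : exists W : 'I_n -> edge G -> int, forall x v, vpZ (W x) v = ev x v + ev r v.
  have : forall x, exists w : edge G -> int, forall v, vpZ w v = ev x v + ev r v.
    by move=> x; have [w [_ ew]] := Sx x; exists w.
  by case/fin_all_exists => W eW; exists W.
exists (fun e => \sum_x t x * W x e - q * w2 e) => v.
rewrite vpZ_sub vpZ_sum.
have -> : vpZ (fun e => q * w2 e) v = q * (2 * ev r v).
  by rewrite -e2 /vpZ mulr_sumr; apply: eq_bigr => e _; ring.
under eq_bigr do rewrite eW mulrDr.
rewrite big_split /= sum_ev -mulr_suml hq; ring.
Qed.


Variable R : realType.

Lemma vp_int (w : edge G -> int) v : vp (fun e => ((w e)%:~R : R)) v = (vpZ w v)%:~R.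
Proof.
rewrite /vp /vpZ rmorph_sum; apply: eq_bigr => e _; by rewrite rmorphM.
Qed.

Lemma vp_sum (K : finType) (a : K -> R) (W : K -> edge G -> R) v :
  vp (fun e => \sum_k a k * W k e) v = \sum_k a k * vp (W k) v.
Proof.
rewrite /vp; under eq_bigr do rewrite mulr_sumr; rewrite exchange_big /=.
apply: eq_bigr => k _; rewrite mulr_sumr; apply: eq_bigr => e _; ring.
Qed.

Lemma vp_sub (W1 W2 : edge G -> R) v :
  vp (fun e => W1 e - W2 e) v = vp W1 v - vp W2 v.
Proof. rewrite /vp -sumrB; apply: eq_bigr => e _; ring. Qed.

Lemma vp_add (W1 W2 : edge G -> R) v :
  vp (fun e => W1 e + W2 e) v = vp W1 v + vp W2 v.
Proof. rewrite /vp -big_split; apply: eq_bigr => e _ /=; ring. Qed.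

Lemma surjR (b : 'I_n -> R) : exists w : edge G -> R, in_fiber b w.
Proof.
have [W eW] : exists W : 'I_n -> edge G -> int, forall x v, vpZ (W x) v = 2 * ev x v.
  have : forall x, exists w : edge G -> int, forall v, vpZ w v = 2 * ev x v.
    by move=> x; have [w [_ ew]] := two_ev x; exists w.
  by case/fin_all_exists => W eW; exists W.
exists (fun e => \sum_x (b x / 2) * (W x e)%:~R) => v.
rewrite vp_sum.
under eq_bigr do rewrite vp_int eW.
rewrite (bigD1 v) //= big1 ?addr0 /ev ?eqxx.
  by rewrite /= mulr1; field.
move=> x /negbTE ->; rewrite /= mulr0; apply/eqP; rewrite ?mulr0 ?mulr0z //.
Qed.

Section Mat.
Variables (k : nat) (f : 'I_k -> edge G) (fg : edge G -> 'I_k).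
Hypothesis fK : cancel f fg.
Hypothesis gK : cancel fg f.

Definition Amat : 'M[int]_(n, k) := \matrix_(v, j) (inc v (f j))%:Z.

Lemma sum_f (F : edge G -> R) : \sum_e F e = \sum_j F (f j).
Proof. by rewrite (reindex f) //; exists fg => x _. Qed.

Lemma sum_fZ (F : edge G -> int) : \sum_e F e = \sum_j F (f j).
Proof. by rewrite (reindex f) //; exists fg => x _. Qed.

Lemma Amat_vp (w : edge G -> R) v :
  (map_mx intr Amat *m \col_j w (f j)) v 0 = vp w v.
Proof. rewrite !mxE /vp sum_f; apply: eq_bigr => j _; by rewrite !mxE. Qed.

Lemma Amat_vpZ (w : edge G -> int) v : (Amat *m \col_j w (f j)) v 0 = vpZ w v.
Proof. rewrite !mxE /vpZ sum_fZ; apply: eq_bigr => j _; by rewrite !mxE. Qed.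

Lemma Amat_X : exists X : 'M[int]_(k, n), Amat *m X = 2%:M.
Proof.
have [W eW] : exists W : 'I_n -> edge G -> int, forall x v, vpZ (W x) v = 2 * ev x v.
  have : forall x, exists w : edge G -> int, forall v, vpZ w v = 2 * ev x v.
    by move=> x; have [w [_ ew]] := two_ev x; exists w.
  by case/fin_all_exists => W eW; exists W.
exists (\matrix_(j, x) W x (f j)); apply/matrixP => v x.
transitivity ((Amat *m \col_j W x (f j)) v 0).
  by rewrite !mxE; apply: eq_bigr => j _; rewrite !mxE.
rewrite Amat_vpZ eW /ev mxE eq_sym; by case: (v == x).
Qed.


Lemma n_le_k : (n <= k)%N.
Proof.
have [X AX] := Amat_X.
apply: (@rank_le R _ _ (map_mx intr Amat) ((2 : R)^-1 *: map_mx intr X)).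
rewrite -scalemxAr -map_mxM AX map_scalar_mx scale_scalar_mx /= mulVf //.
by rewrite pnatr_eq0.
Qed.

Lemma vp_ext (w1 w2 : edge G -> R) v : (forall e, w1 e = w2 e) -> vp w1 v = vp w2 v.
Proof. by move=> E; rewrite /vp; apply: eq_bigr => e _; rewrite E. Qed.

End Mat.

Lemma fiber_struct d (f : 'I_(n + d) -> edge G) (fg : edge G -> 'I_(n + d)) :
  cancel f fg -> cancel fg f ->
  exists u : 'I_d -> edge G -> R,
  [/\ lin_indep u,
      (forall z : edge G -> R, (forall v, vp z v = 0) <->
          exists lam : 'I_d -> R, forall e, z e = \sum_k lam k * u k e)
    & (forall z : edge G -> R, ((forall v, vp z v = 0) /\ forall e, z e \is a Num.int) <->
          exists m : 'I_d -> int, forall e, z e = \sum_k (m k)%:~R * u k e)].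
Proof.
move=> fK gK.
have [X AX] := Amat_X fK gK.
have [U [Uind Ukr Ukz]] := kb R AX.
exists (fun k e => ((U (fg e) k)%:~R : R)); split.
- move=> lam hlam k.
  have : map_mx intr U *m \col_k lam k = 0.
    apply/matrixP => j i; rewrite !mxE -[RHS](hlam (f j)) fK.
    by apply: eq_bigr => k' _; rewrite !mxE mulrC.
  by move/Uind/matrixP => /(_ k 0); rewrite !mxE.
- move=> z; split.
    move=> hz.
    have : map_mx intr (Amat f) *m \col_j z (f j) = 0.
      by apply/matrixP => v i; rewrite ord1 (Amat_vp fK gK) hz mxE.
    case/Ukr => lam elam; exists (fun k => lam k 0) => e.
    move/matrixP: elam => /(_ (fg e) 0); rewrite !mxE gK => ->.
    by apply: eq_bigr => k _; rewrite !mxE mulrC.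
  move=> [lam elam] v.
  rewrite -(Amat_vp fK gK).
  have -> : map_mx intr (Amat f) *m \col_j z (f j) = 0.
    apply/Ukr; exists (\col_k lam k).
    apply/matrixP => j i; rewrite ord1 !mxE elam fK.
    by apply: eq_bigr => k _; rewrite !mxE mulrC.
  by rewrite mxE.
- move=> z; split.
    move=> [hz zint].
    have [zz ezz] : exists zz : edge G -> int, forall e, z e = (zz e)%:~R.
      have : forall e, exists y : int, z e = y%:~R by move=> e; apply/intrP.
      by case/fin_all_exists => zz ezz; exists zz.
    have : Amat f *m \col_j zz (f j) = 0.
      apply/matrixP => v i; rewrite ord1 (Amat_vpZ fK gK) mxE.
      apply: (@intr_inj R); rewrite rmorph0 -vp_int -(hz v); apply: vp_ext => e; by rewrite ezz.
    case/Ukz => lam elam; exists (fun k => lam k 0) => e.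
    move/matrixP: elam => /(_ (fg e) 0); rewrite !mxE gK => E.
    rewrite ezz E rmorph_sum; apply: eq_bigr => k _; by rewrite rmorphM mulrC.
  move=> [m em].
  pose zz e := \sum_k m k * U (fg e) k.
  have ezz : forall e, z e = (zz e)%:~R.
    by move=> e; rewrite em rmorph_sum; apply: eq_bigr => k _; rewrite rmorphM.
  split; last by move=> e; rewrite ezz intr_int.
  move=> v; rewrite (vp_ext (w2 := fun e => (zz e)%:~R)) // vp_int.
  rewrite -(Amat_vpZ fK gK).
  have -> : Amat f *m \col_j zz (f j) = 0.
    apply/Ukz; exists (\col_k m k).
    apply/matrixP => j i; rewrite ord1 !mxE /zz fK.
    by apply: eq_bigr => k _; rewrite !mxE mulrC.
  by rewrite mxE.
Qed.


Section Edge.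
Variable e : edge G.

Lemma mem_edge_eq h : h \in val e -> e = edge_of h.
Proof.
have [h0 ->] := edge_ofP e; rewrite /= !inE => /orP [] /eqP ->; apply: val_inj => //=.
by rewrite ivK setUC.
Qed.

Lemma notin_iv h : h \notin val e -> iv h \notin val e.
Proof.
apply: contra => /mem_edge_eq ->; rewrite /= ivK !inE eqxx orbT //.
Qed.

Lemma adjm_sym : symmetric (adj_minus e).
Proof.
suff S : forall x y, adj_minus e x y -> adj_minus e y x.
  by move=> x y; apply/idP/idP; apply: S.
move=> x y /existsP [h /and3P [he hx hy]]; apply/existsP; exists (iv h).
by rewrite notin_iv // ivK hx hy.
Qed.

Lemma adjm_step u h : h \notin val e -> connect (adj_minus e) u (vl h) ->
  connect (adj_minus e) u (vl (iv h)).
Proof.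
move=> he cu; apply: (connect_trans cu); apply: connect1; apply/existsP; exists h.
by rewrite he !eqxx.
Qed.

Lemma adj_conn u v : connect (adj G) u v.
Proof. by move/forallP: conn => /(_ u) /forallP; apply. Qed.

Lemma reach_end u : exists h, h \in val e /\ connect (adj_minus e) u (vl h).
Proof.
have [h0 eh0] := edge_ofP e.
have h0e : h0 \in val e by rewrite eh0 /= !inE eqxx.
pose Q v := (exists h, h \in val e /\ connect (adj_minus e) u (vl h)) \/ connect (adj_minus e) u v.
have : Q (vl h0).
  apply: (connect_rind (Q := Q) _ _ (adj_conn u (vl h0))); first by right.
  move=> y z _ Qy; rewrite /adj => /existsP [h /andP [/eqP hy /eqP hz]].
  case: Qy => [?|cy]; first by left.
  case: (boolP (h \in val e)) => he.
    by left; exists h; rewrite hy.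
  by right; rewrite -hz; apply: adjm_step => //; rewrite hy.
by case => // c; exists h0.
Qed.

Lemma bridge_out u h1 : is_bridge e -> h1 \in val e ->
  vl h1 \in comp_minus e u -> vl (iv h1) \notin comp_minus e u.
Proof.
move=> br h1e in1; apply/negP => in2; move/negP: br; apply.
have eh := mem_edge_eq h1e.
have all : forall v, connect (adj_minus e) u v.
  move=> v; apply: (connect_rind (Q := fun v => connect (adj_minus e) u v) _ _ (adj_conn u v)) => //.
  move=> y z _ cy; rewrite /adj => /existsP [h /andP [/eqP hy /eqP hz]].
  case: (boolP (h \in val e)) => he.
    rewrite eh /= !inE in he; case/orP: he => /eqP hh; rewrite -hz hh.
      by move: in2; rewrite /comp_minus inE.
    by rewrite ivK; move: in1; rewrite /comp_minus inE.
  by rewrite -hz; apply: adjm_step => //; rewrite hy.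
apply/forallP => x; apply/forallP => y.
apply: (connect_trans _ (all y)).
by rewrite (sym_connect_sym adjm_sym).
Qed.

End Edge.

Lemma vpZ_ind h v :
  vpZ (fun e => 2 * ((e == edge_of h) : nat)%:Z) v = 2 * (((vl h == v) + (vl (iv h) == v))%N)%:Z.
Proof.
rewrite /vpZ (bigD1 (edge_of h)) //= eqxx big1 ?addr0.
  by rewrite inc_edge_of /= mulr1 mulrC.
by move=> e /negbTE ->; rewrite /= !mulr0.
Qed.

Lemma vpZ_add (W1 W2 : edge G -> int) v :
  vpZ (fun e => W1 e + W2 e) v = vpZ W1 v + vpZ W2 v.
Proof. rewrite /vpZ -big_split; apply: eq_bigr => e _ /=; ring. Qed.

Lemma nonstatic_kernel e : ~~ static e ->
  exists k : edge G -> int, (forall v, vpZ k v = 0) /\ k e != 0.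
Proof.
rewrite /static nbip /= negb_exists => /forallP nst.
have [h0 eh0] := edge_ofP e.
pose P := fun h => h \notin val e.
pose Q := fun e' : edge G => e' != e.
have Sg : forall h, P h -> SQ Q (fun i => ((vl h == i) : nat)%:Z + ((vl (iv h) == i) : nat)%:Z).
  move=> h Ph; apply: SQgen; rewrite /Q; apply: contraNneq Ph => <-.
  by rewrite /= !inE eqxx.
have two : forall r, SQ Q (fun i => 2 * ev r i).
  move=> r.
  have nob : forall c : 'I_n -> bool, exists h, [/\ P h, connect (adjP vl iv P) r (vl h)
     & c (vl h) = c (vl (iv h))].
    move=> c; move: (nst r); rewrite negb_exists => /forallP /(_ [ffun i => c i]).
    rewrite /proper_on negb_forall => /existsP [h]; rewrite negb_imply !ffunE negbK.
    case/andP => /andP [he hin] /eqP ch; exists h; split => //.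
    by move: hin; rewrite /comp_minus inE.
  by have [A _] := abstract_main (@SQ0 Q) (@SQsub Q) Sg nob.
have [w [w0 ew]] : SQ Q (fun i => 2 * ev (vl h0) i + 2 * ev (vl (iv h0)) i).
  have N2 : SQ Q (fun i => - (2 * ev (vl (iv h0)) i)).
    apply: (SQsub (SQ0 Q) (two (vl (iv h0)))) => i /=; ring.
  apply: (SQsub (two (vl h0)) N2) => i /=; ring.
exists (fun e' => w e' - 2 * ((e' == edge_of h0) : nat)%:Z); split.
  move=> v; rewrite vpZ_sub vpZ_ind ew /ev; rewrite PoszD; ring.
by rewrite w0 /Q ?eqxx // eh0 eqxx.
Qed.


Definition sgn (c : {ffun 'I_n -> bool}) i : R := if c i then 1 else -1.

Lemma sum_split_sign (C : {set 'I_n}) (c : {ffun 'I_n -> bool}) (F : 'I_n -> R) :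
  \sum_(i in C | c i) F i - \sum_(i in C | ~~ c i) F i = \sum_(i in C) sgn c i * F i.
Proof.
rewrite [RHS](bigID (fun i => c i)) /=; congr (_ + _).
  by apply: eq_bigr => i /andP [_ ci]; rewrite /sgn ci mul1r.
rewrite -sumrN; apply: eq_bigr => i /andP [_ /negbTE ci]; by rewrite /sgn ci mulN1r.
Qed.

Lemma coef_pt (C : {set 'I_n}) (c : {ffun 'I_n -> bool}) x :
  \sum_(i in C) sgn c i * ((x == i) : nat)%:R = if x \in C then sgn c x else 0.
Proof.
rewrite big_mkcond (bigD1 x) //= eqxx big1 ?addr0.
  by case: (x \in C); rewrite ?mulr1.
by move=> i /negbTE; rewrite eq_sym => ->; case: (i \in C); rewrite ?mulr0.
Qed.

Definition tau (C : {set 'I_n}) (c : {ffun 'I_n -> bool}) h := if vl h \in C then sgn c (vl h) else 0.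

Lemma coef_edge (C : {set 'I_n}) (c : {ffun 'I_n -> bool}) h :
  \sum_(i in C) sgn c i * (inc i (edge_of h))%:R = tau C c h + tau C c (iv h).
Proof.
under eq_bigr do rewrite inc_edge_of natrD mulrDr.
by rewrite big_split /= !coef_pt.
Qed.

Lemma static_val e (b : 'I_n -> R) (w : edge G -> R) :
  static e -> in_fiber b w -> w e = f_e e b.
Proof.
move=> st fib.
have [p hp] : exists p, fe_data e p.
  move: st; rewrite /static nbip /= => /existsP [u /existsP [c pc]].
  have [h [he hin]] := reach_end e u.
  case ch: (c (vl h)).
    exists (u, c); rewrite /fe_data pc /=; apply/existsP; exists h.
    by rewrite he /comp_minus inE hin ch.
  exists (u, [ffun i => ~~ c i]); rewrite /fe_data /=; apply/andP; split.
    move: pc; rewrite /proper_on => /forallP pc; apply/forallP => h'; rewrite !ffunE.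
    apply/implyP => H'; have := implyP (pc h') H'.
    by case: (c (vl h')); case: (c (vl (iv h'))).
  by apply/existsP; exists h; rewrite he /comp_minus inE hin ffunE ch.
rewrite /f_e; case: pickP => [[u c] /= hp' | /(_ p)]; last by rewrite hp.
move: hp' => /andP [/= pc /existsP [h1 /and3P [h1e h1C ch1]]].
set C := comp_minus e u in pc h1C *.
have eh1 := mem_edge_eq h1e.
have key : \sum_(i in C | c i) b i - \sum_(i in C | ~~ c i) b i =
           \sum_e' w e' * \sum_(i in C) sgn c i * (inc i e')%:R.
  rewrite sum_split_sign; under eq_bigr do rewrite -fib.
  rewrite /vp; under eq_bigr do rewrite mulr_sumr; rewrite exchange_big /=.
  apply: eq_bigr => e' _; rewrite mulr_sumr; apply: eq_bigr => i _; ring.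
have others : forall e', e' != e -> \sum_(i in C) sgn c i * (inc i e')%:R = 0.
  move=> e' ne; have [h eh] := edge_ofP e'.
  have he : h \notin val e.
    by apply: contra ne => /mem_edge_eq ->; rewrite eh.
  rewrite eh coef_edge /tau.
  case: (boolP (vl h \in C)) => hC.
    have hC' : vl (iv h) \in C.
      by move: hC; rewrite /C /comp_minus !inE; apply: adjm_step.
    rewrite hC'.
    have := implyP (forallP pc h); rewrite he hC => /(_ isT).
    rewrite /sgn; case: (c (vl h)); case: (c (vl (iv h))) => //= _.
    1,2: by ring.
  have hC' : vl (iv h) \notin C.
    apply: contra hC; rewrite /C /comp_minus !inE => H.
    by rewrite -[h]ivK; apply: adjm_step => //; apply: notin_iv.
  by rewrite (negbTE hC') addr0.
rewrite key (bigD1 e) //= [X in _ + X]big1 ?addr0; last first.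
  by move=> e' ne; rewrite others // mulr0.
have ce : \sum_(i in C) sgn c i * (inc i e)%:R = if is_bridge e then 1 else 2.
  rewrite {1}eh1 coef_edge /tau h1C /sgn ch1.
  case br: (is_bridge e).
    by rewrite (negbTE (bridge_out br h1e h1C)) addr0.
  have allC : forall v, v \in C.
    move=> v; move: br; rewrite /is_bridge => /negbFE /forallP /(_ u) /forallP /(_ v).
    by rewrite /C /comp_minus inE.
  rewrite allC.
  case cf: (c (vl (iv h1))); first by [].
  move/negP: nbip; case; apply/existsP; exists c; apply/forallP => h.
  case: (boolP (h \in val e)) => he.
    move: he; rewrite eh1 /= !inE => /orP [] /eqP ->; first by rewrite ch1 cf.
    by rewrite ivK ch1 cf.
  by have := implyP (forallP pc h); rewrite he allC => /(_ isT).
rewrite ce; case: (is_bridge e); first by rewrite !mul1r mulr1.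
by rewrite mulrA mulrC mulrA divff ?mul1r // pnatr_eq0.
Qed.

End Conn.
End Graph.

Lemma sum_ev1 n (x : 'I_n) : \sum_v ev x v = 1.
Proof.
rewrite (bigD1 x) //= /ev eqxx big1 ?addr0 // => v nv; by rewrite eq_sym (negbTE nv).
Qed.

Lemma sum_inc n (G : ribbon_graph n) (e : edge G) : \sum_v ((inc v e)%:Z) = 2.
Proof.
have [h ->] := edge_ofP e.
under eq_bigr do rewrite inc_edge_of PoszD.
by rewrite big_split /= (sum_ev1 (vlab G h)) (sum_ev1 (vlab G (Defs.inv G h))).
Qed.

Theorem lemma3p4 (R : realType) (g n : nat) (kappa : seq nat) (G : ribbon_graph n) :
  all odd kappa -> in_RG G kappa g -> ~~ bipartite G ->
  [/\ (* (1) surjectivity *)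
      (forall b : 'I_n -> R, exists w : edge G -> R, in_fiber b w),
      (* (2) fibers are affine subspaces of dimension |E| - |V| *)
      (forall b : 'I_n -> R, exists d (w0 : edge G -> R) (u : 'I_d -> edge G -> R),
          fiber_affine_dim b w0 u),
      (* (3) static edges have constant weight f_e(b), others are non-constant *)
      (forall (b : 'I_n -> R) (e : edge G),
          (static e -> forall w, in_fiber b w -> w e = f_e e b) /\
          (~~ static e -> exists w1 w2, [/\ in_fiber b w1, in_fiber b w2 & w1 e != w2 e]))
    & (* (4) integral points *)
      (forall b : 'I_n -> R,
         ((exists bz : 'I_n -> int,
              (forall v, b v = (bz v)%:~R) /\ (2 %| \sum_v bz v)%Z) ->
          exists d (w0 : edge G -> R) (u : 'I_d -> edge G -> R),
            fiber_affine_dim b w0 u /\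
            forall w, (in_fiber b w /\ integral_w (G:=G) w) <->
              exists m : 'I_d -> int, forall e, w e = aff_param w0 u (fun k => (m k)%:~R) e) /\
         (~ (exists bz : 'I_n -> int,
              (forall v, b v = (bz v)%:~R) /\ (2 %| \sum_v bz v)%Z) ->
          forall w, in_fiber b w -> ~ integral_w (G:=G) w))].
Proof.
move=> _ [conn _ _] nbip.
have le := n_le_k conn nbip R (@enum_valK (edge G)) (@enum_rankK (edge G)).
move: le; set K := (X in (n <= X)%N) => le.
set d := (K - n)%N.
have eq : (n + d = K)%N by rewrite subnKC.
pose f := fun j : 'I_(n + d) => (enum_val (cast_ord eq j) : edge G).
pose fg := fun e : edge G => cast_ord (esym eq) (enum_rank e).
have fK : cancel f fg by move=> j; rewrite /f /fg enum_valK cast_ordK.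
have gK : cancel fg f by move=> e; rewrite /f /fg cast_ordKV enum_rankK.
have [u [uind ukR ukZ]] := fiber_struct conn nbip R fK gK.
have card : (d + n)%N = #|edge_set G|.
  rewrite addnC eq /K; apply: etrans (card_sig (fun x => x \in edge_set G)) _.
  by apply: eq_card => x.
have fad : forall b w0, in_fiber b w0 -> fiber_affine_dim b w0 u.
  move=> b w0 f0; split => // w; split.
    move=> fw.
    have hz : forall v, vp (fun e => w e - w0 e) v = 0 by move=> v; rewrite vp_sub fw f0 subrr.
    have [lam el] := (ukR (fun e => w e - w0 e)).1 hz.
    by exists lam => e; rewrite /aff_param -el addrC subrK.
  move=> [lam el] v.
  rewrite (vp_ext (w2 := fun e => w0 e + \sum_k lam k * u k e)) // vp_add f0.
  by rewrite ((ukR (fun e => \sum_k lam k * u k e)).2 (ex_intro _ lam (fun e => erefl))) addr0.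
split.
- exact: surjR.
- by move=> b; have [w0 f0] := surjR conn nbip b; exists d, w0, u; apply: fad.
- move=> b e; split; first by move=> st w fw; apply: (static_val conn nbip st fw).
  move=> nst; have [kz [hk ke]] := nonstatic_kernel nbip nst.
  have [w0 f0] := surjR conn nbip b.
  exists w0, (fun e' => w0 e' + ((kz e')%:~R : R)); split => //.
    by move=> v; rewrite vp_add vp_int hk f0 addr0.
  apply/negP => /eqP E; move/negP: ke; apply; rewrite -(intr_eq0 R); apply/eqP.
  by move: E; rewrite -{1}(addr0 (w0 e)) => /addrI <-.
- move=> b; split.
    move=> [bz [eb ev]]; have [wz ewz] := surjZ conn nbip ev.
    pose w0 := fun e => ((wz e)%:~R : R).
    have f0 : in_fiber b w0 by move=> v; rewrite vp_int ewz eb.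
    exists d, w0, u; split; first exact: fad.
    move=> w; split.
      move=> [fw iw].
      have H : (forall v, vp (fun e => w e - w0 e) v = 0) /\ (forall e, w e - w0 e \is a Num.int).
        split; first by move=> v; rewrite vp_sub fw f0 subrr.
        by move=> e; rewrite rpredB // intr_int.
      have [m em] := (ukZ (fun e => w e - w0 e)).1 H.
      by exists m => e; rewrite /aff_param -em addrC subrK.
    move=> [m em].
    have [hk hi] := (ukZ (fun e => \sum_k (m k)%:~R * u k e)).2 (ex_intro _ m (fun _ => erefl)).
    split.
      move=> v; rewrite (vp_ext (w2 := fun e => w0 e + \sum_k (m k)%:~R * u k e)) // vp_add f0.
      by rewrite hk addr0.
    by move=> e; rewrite em /aff_param rpredD // ?intr_int // hi.
  move=> nex w fw iw; apply: nex.
  have [wz ewz] : exists wz : edge G -> int, forall e, w e = (wz e)%:~R.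
    have : forall e, exists y : int, w e = y%:~R by move=> e; apply/intrP.
    by case/fin_all_exists => wz ewz; exists wz.
  exists (fun v => vpZ wz v); split.
    by move=> v; rewrite -fw (vp_ext (w2 := fun e => ((wz e)%:~R : R))) // vp_int.
  apply/dvdzP; exists (\sum_e wz e).
  rewrite /vpZ exchange_big /= mulr_suml; apply: eq_bigr => e _.
  by rewrite -mulr_suml sum_inc mulrC.
Qed.
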